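(* There is a constant $C>0$ depending only on $\lambda$ such that: (i) for all $m<n$, $Q\in\mathcal D_m$, $R\in\mathcal D_n$ with $R\subset Q$, one has $|S_R-S_Q-S_{Q,R}|\le C\,a_m$; (ii) for all $m\le n$, $Q\in\mathcal D_m$, $\tilde R\in\mathcal D_n$, $R\in\mathcal D_{n+1}$ with $R\subset\tilde R\subset Q$, one has $|S_{Q,R}-S_{Q,\tilde R}|\le C\,a_n$.
   Context: Fix $(\lambda_n)_{n\ge1}$ and $\lambda$ with $\frac14\le\lambda_n\le\lambda<\frac12$. Starting from $Q_0=[0,1]^2\subset\mathbb{C}$, inductively replace each square of generation $n-1$ by its $4$ axis-parallel corner subsquares of side ratio $\lambda_n$; generation $n$ consists of $4^n$ closed squares of side $s_n=\lambda_1\cdots\lambda_n$ ($s_0=1$), forming the family $\mathcal D_n$. $K=\bigcap_n\bigcup_{Q\in\mathcal D_n}Q$, $\mu$ is the Borel probability measure on $K$ giving mass $4^{-n}$ to each $Q\in\mathcal D_n$, and $a_n=1/(4^ns_n)$. Let $C(z)=1/z$. For $Q\in\mathcal D_n$ set $S_Q=\frac{1}{\mu(Q)}\int_Q\int_{K\setminus Q}C(z-y)\,d\mu(y)\,d\mu(z)$. For $R\subset Q$ with $Q,R\in\mathcal D$ define the relative martingale $S_{Q,R}=\frac{1}{\mu(R)}\int_R\int_{Q\setminus R}C(z-y)\,d\mu(y)\,d\mu(z)$ (so $S_{Q,Q}=0$). *)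

(* Defs.v *)
From HB Require Import structures.
From mathcomp Require Import all_boot all_order all_algebra.
From mathcomp Require Import all_classical all_reals all_analysis.
Set Implicit Arguments. Unset Strict Implicit. Unset Printing Implicit Defensive.
Import Order.TTheory GRing.Theory Num.Theory.
Local Open Scope classical_set_scope.
Local Open Scope ring_scope.

Section Cantor.
Variable R : realType.
Variable lam : nat -> R. (* lam k = lambda_k, only k >= 1 is used *)

Definition side (n : nat) : R := \prod_(1 <= k < n.+1) lam k.

Definition a_ (n : nat) : R := 1 / (4%:R ^+ n * side n).

(* a square of generation n is coded by a word of digits in {0,1,2,3} of
   length n; digit d at position k (0-based) selects the corner subsquare
   at generation k+1: x-offset (odd d), y-offset (1 < d). *)
Definition bitx (d : 'I_4) : R := (odd d)%:R.
Definition bity (d : 'I_4) : R := (1 < d)%N%:R.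

Definition cornerx (w : seq 'I_4) : R :=
  \sum_(k < size w) bitx (nth ord0 w k) * (side k * (1 - lam k.+1)).
Definition cornery (w : seq 'I_4) : R :=
  \sum_(k < size w) bity (nth ord0 w k) * (side k * (1 - lam k.+1)).

Definition square (w : seq 'I_4) : set (R * R) :=
  [set z | cornerx w <= z.1 <= cornerx w + side (size w) /\
           cornery w <= z.2 <= cornery w + side (size w)].

Definition inD (n : nat) (Q : set (R * R)) : Prop :=
  exists w : seq 'I_4, size w = n /\ Q = square w.

Definition Kset : set (R * R) := [set z | forall n, exists Q, inD n Q /\ Q z].

(* C(z - y) = 1/(z - y), written out in real and imaginary parts,
   identifying (x1,x2) : R * R with x1 + i x2. *)
Definition cauchy_re (z y : R * R) : R :=
  (z.1 - y.1) / ((z.1 - y.1) ^+ 2 + (z.2 - y.2) ^+ 2).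
Definition cauchy_im (z y : R * R) : R :=
  - (z.2 - y.2) / ((z.1 - y.1) ^+ 2 + (z.2 - y.2) ^+ 2).

Definition cmod (u v : R) : R := Num.sqrt (u ^+ 2 + v ^+ 2).

End Cantor.

Section Sums.
Variables (R : realType) (mu : {measure set (R * R)%type -> \bar R}).

Definition avg_iint (A B : set (R * R)) (f : R * R -> R * R -> R) : R :=
  (fine (mu A))^-1 * Rintegral mu A (fun z => Rintegral mu B (fun y => f z y)).

Definition S_re (lam : nat -> R) (Q : set (R * R)) : R :=
  avg_iint Q (Kset lam `\` Q) (@cauchy_re R).
Definition S_im (lam : nat -> R) (Q : set (R * R)) : R :=
  avg_iint Q (Kset lam `\` Q) (@cauchy_im R).

Definition SQR_re (Q Rs : set (R * R)) : R := avg_iint Rs (Q `\` Rs) (@cauchy_re R).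
Definition SQR_im (Q Rs : set (R * R)) : R := avg_iint Rs (Q `\` Rs) (@cauchy_im R).
End Sums.

(* Main.v *)
Require Import Defs.
From HB Require Import structures.
From mathcomp Require Import all_boot all_order all_algebra.
From mathcomp Require Import all_classical all_reals all_analysis.
From mathcomp Require Import ring lra.
From mathcomp Require Import measurable_realfun.
Import Order.TTheory GRing.Theory Num.Theory.
Local Open Scope classical_set_scope.
Local Open Scope ring_scope.
Set Implicit Arguments. Unset Strict Implicit. Unset Printing Implicit Defensive.
Section Geo.
Variable R : realType.
Variable lam : nat -> R.
Variable l0 : R.
Hypothesis hl : forall n : nat, (0 < n)%N -> 4%:R^-1 <= lam n /\ lam n <= l0.
Hypothesis hl0 : l0 < 2%:R^-1.

Lemma lam_pos n : (0 < n)%N -> 0 < lam n.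
Proof. by move=> /hl [h _]; apply: lt_le_trans h; rewrite invr_gt0 ltr0n. Qed.
Lemma lam_le n : (0 < n)%N -> lam n <= l0.
Proof. by move=> /hl []. Qed.

Lemma sideS n : side lam n.+1 = side lam n * lam n.+1.
Proof. by rewrite /side big_nat_recr. Qed.

Lemma side0 : side lam 0 = 1.
Proof. by rewrite /side big_geq. Qed.

Lemma side_pos n : 0 < side lam n.
Proof.
elim: n => [|n IH]; first by rewrite side0.
by rewrite sideS mulr_gt0 // lam_pos.
Qed.

Lemma lam_lt1 n : (0 < n)%N -> lam n < 1.
Proof. move=> h; have := lam_le h; have := hl0; lra. Qed.

Lemma side_le k n : (k <= n)%N -> side lam n <= side lam k.
Proof.
elim: n => [|n IH]; first by rewrite leqn0 => /eqP ->.
rewrite leq_eqVlt => /orP [/eqP -> //| h].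
apply: le_trans (IH h); rewrite sideS.
have := side_pos n; have := lam_lt1 (ltn0Sn n); have := lam_pos (ltn0Sn n); nra.
Qed.

Definition cor (b : 'I_4 -> R) (w : seq 'I_4) : R :=
  \sum_(k < size w) b (nth ord0 w k) * (side lam k * (1 - lam k.+1)).

Lemma delta_eq j : side lam j * (1 - lam j.+1) = side lam j - side lam j.+1.
Proof. by rewrite sideS; ring. Qed.

Lemma delta_ge0 j : 0 <= side lam j * (1 - lam j.+1).
Proof. rewrite delta_eq subr_ge0; exact: side_le. Qed.

Lemma tail_bnd (b : nat -> R) k n : (forall j, 0 <= b j <= 1) -> (k <= n)%N ->
  0 <= \sum_(k <= j < n) b j * (side lam j * (1 - lam j.+1)) <= side lam k - side lam n.
Proof.
move=> hb; elim: n => [|n IH].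
  by rewrite leqn0 => /eqP ->; rewrite big_geq // subrr lexx.
rewrite leq_eqVlt => /orP [/eqP ->| h]; first by rewrite big_geq // subrr lexx.
have := IH h; rewrite big_nat_recr //=.
have := hb n; have := delta_ge0 n; rewrite delta_eq => h1 h2 h3.
nra.
Qed.

Lemma cor_nat b w : cor b w =
  \sum_(0 <= j < size w) b (nth ord0 w j) * (side lam j * (1 - lam j.+1)).
Proof. by rewrite /cor big_mkord. Qed.

Lemma cor_take b w k : (k <= size w)%N ->
  cor b w = cor b (take k w) +
     \sum_(k <= j < size w) b (nth ord0 w j) * (side lam j * (1 - lam j.+1)).
Proof.
move=> hk; rewrite !cor_nat size_takel // (big_cat_nat (leq0n k) hk) /=.
congr (_ + _); apply: eq_big_nat => j /andP [_ hj].
by rewrite nth_take.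
Qed.

End Geo.

Section Geo2.
Variable R : realType.
Variable lam : nat -> R.
Variable l0 : R.
Hypothesis hl : forall n : nat, (0 < n)%N -> 4%:R^-1 <= lam n /\ lam n <= l0.
Hypothesis hl0 : l0 < 2%:R^-1.

Definition sep (z y : R * R) (g : R) := g <= `|z.1 - y.1| \/ g <= `|z.2 - y.2|.

Definition b01 (b : 'I_4 -> R) := forall d, b d = 0 \/ b d = 1.

Lemma b01_bnd b : b01 b -> forall d, 0 <= b d <= 1.
Proof. by move=> h d; case: (h d) => ->; rewrite ?lexx ?ler01. Qed.

Lemma bitx01 : b01 (@bitx R).
Proof. by move=> d; rewrite /bitx; case: (odd d); [right|left]. Qed.
Lemma bity01 : b01 (@bity R).
Proof. by move=> d; rewrite /bity; case: (1 < d)%N; [right|left]. Qed.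

Lemma coord_take b w k x : b01 b -> (k <= size w)%N ->
  cor lam b w <= x <= cor lam b w + side lam (size w) ->
  cor lam b (take k w) <= x <= cor lam b (take k w) + side lam k.
Proof.
move=> hb hk; rewrite (cor_take lam b hk).
have := @tail_bnd R lam l0 hl hl0 (fun j => b (nth ord0 w j)) k (size w)
   (fun j => b01_bnd hb _) hk.
lra.
Qed.

Lemma square_take w k : (k <= size w)%N -> square lam w `<=` square lam (take k w).
Proof.
move=> hk z [hx hy]; split.
  by have := coord_take bitx01 hk hx; rewrite size_takel.
by have := coord_take bity01 hk hy; rewrite size_takel.
Qed.

Lemma cor_split b w k : (k < size w)%N ->
  cor lam b w = cor lam b (take k w) + b (nth ord0 w k) * (side lam k * (1 - lam k.+1))
   + \sum_(k.+1 <= j < size w) b (nth ord0 w j) * (side lam j * (1 - lam j.+1)).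
Proof.
move=> hk; rewrite (cor_take lam b (ltnW hk)) (big_ltn hk) /=; ring.
Qed.

Lemma gap_pos k : 0 < side lam k * (1 - 2%:R * l0).
Proof.
apply: mulr_gt0; first exact: (side_pos hl).
have h2 : (2%:R : R)^-1 * 2%:R = 1 by rewrite mulVf // pnatr_eq0.
move: hl0 h2; set t := (2%:R : R)^-1. nra.
Qed.

Lemma coord_sep b u v k a c : b01 b -> size u = size v -> (k < size u)%N ->
  take k u = take k v -> b (nth ord0 u k) = 0 -> b (nth ord0 v k) = 1 ->
  cor lam b u <= a <= cor lam b u + side lam (size u) ->
  cor lam b v <= c <= cor lam b v + side lam (size v) ->
  side lam k * (1 - 2%:R * l0) <= c - a.
Proof.
move=> hb huv hk htk hbu hbv ha hc.
have hkv : (k < size v)%N by rewrite -huv.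
move: ha hc; rewrite (cor_split b hk) (cor_split b hkv) htk hbu hbv.
have := @tail_bnd R lam l0 hl hl0 (fun j => b (nth ord0 u j)) k.+1 (size u)
   (fun j => b01_bnd hb _) hk.
have := @tail_bnd R lam l0 hl hl0 (fun j => b (nth ord0 v j)) k.+1 (size v)
   (fun j => b01_bnd hb _) hkv.
rewrite (delta_eq lam) (sideS lam) -huv.
have := lam_le hl (ltn0Sn k). have := side_pos hl k.
move=> h1 h2 h3 h4 h5 h6. nra.
Qed.

Lemma digit_diff (du dv : 'I_4) : du <> dv ->
  bitx R du <> bitx R dv \/ bity R du <> bity R dv.
Proof.
rewrite /bitx /bity.
case: du dv => [[|[|[|[|?]]]] ?] [[|[|[|[|?]]]] ?] //= h;
 try (by exfalso; apply: h; apply: val_inj);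
 try (by left => /eqP; rewrite ?oner_eq0 // eq_sym oner_eq0);
 try (by right => /eqP; rewrite ?oner_eq0 // eq_sym oner_eq0).
Qed.

Lemma first_diff (u v : seq 'I_4) : size u = size v -> u <> v ->
  exists k, [/\ (k < size u)%N, take k u = take k v & nth ord0 u k <> nth ord0 v k].
Proof.
elim: u v => [|a u IH] v.
  by case: v => [|b v] //= _ h; exfalso; apply: h.
case: v => [|b v] //= [hs] hne.
have [eab|hab] := eqVneq a b.
  have hne' : u <> v.
    move=> e; apply: hne; rewrite e eab; reflexivity.
  have [k [h1 h2 h3]] := IH v hs hne'.
  by exists k.+1; split => //=; rewrite ?h2 ?eab.
by exists 0%N; split => //; apply/eqP.
Qed.

Lemma word_sep u v j : size u = size v -> u <> v -> take j u = take j v ->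
  exists k, [/\ (j <= k)%N, (k < size u)%N, take k u = take k v &
    forall z y, square lam u z -> square lam v y ->
      sep z y (side lam k * (1 - 2%:R * l0))].
Proof.
move=> hs hne hj.
have [k [hk htk hnk]] := first_diff hs hne.
have hjk : (j <= k)%N.
  rewrite leqNgt; apply/negP => hkj; apply: hnk.
  by rewrite -(nth_take _ hkj) hj nth_take.
exists k; split => // z y [hzx hzy] [hyx hyy].
case: (digit_diff hnk) => hd.
- left; case: (bitx01 (nth ord0 u k)) => hu.
  + have hv : bitx R (nth ord0 v k) = 1 by case: (bitx01 (nth ord0 v k)) => // e; exfalso; apply: hd; rewrite hu e.
    have := coord_sep bitx01 hs hk htk hu hv hzx hyx.
    move=> h; apply: le_trans h _; rewrite distrC; exact: ler_norm.
  + have hv : bitx R (nth ord0 v k) = 0 by case: (bitx01 (nth ord0 v k)) => // e; exfalso; apply: hd; rewrite hu e.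
    have hk' : (k < size v)%N by rewrite -hs.
    have := coord_sep bitx01 (esym hs) hk' (esym htk) hv hu hyx hzx.
    move=> h; apply: le_trans h _; exact: ler_norm.
- right; case: (bity01 (nth ord0 u k)) => hu.
  + have hv : bity R (nth ord0 v k) = 1 by case: (bity01 (nth ord0 v k)) => // e; exfalso; apply: hd; rewrite hu e.
    have := coord_sep bity01 hs hk htk hu hv hzy hyy.
    move=> h; apply: le_trans h _; rewrite distrC; exact: ler_norm.
  + have hv : bity R (nth ord0 v k) = 0 by case: (bity01 (nth ord0 v k)) => // e; exfalso; apply: hd; rewrite hu e.
    have hk' : (k < size v)%N by rewrite -hs.
    have := coord_sep bity01 (esym hs) hk' (esym htk) hv hu hyy hzy.
    move=> h; apply: le_trans h _; exact: ler_norm.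
Qed.

Lemma square_inj u v z : size u = size v -> square lam u z -> square lam v z -> u = v.
Proof.
move=> hs hu hv; apply: contrapT => hne.
have h0 : take 0 u = take 0 v by rewrite !take0.
have [k [_ _ _ hsep]] := word_sep hs hne h0.
have := hsep z z hu hv; have := gap_pos k; rewrite /sep !subrr normr0; lra.
Qed.

Lemma square_prefix u v z : (size u <= size v)%N -> square lam u z -> square lam v z ->
  u = take (size u) v.
Proof.
move=> hs hu hv; apply: (square_inj (z := z)) => //.
  by rewrite size_takel.
exact: square_take.
Qed.

Lemma square_corner w : square lam w (cornerx lam w, cornery lam w).
Proof.
have := side_pos hl (size w); rewrite /square /=; split; lra.
Qed.

End Geo2.

Section Kern.
Variable R : realType.

Lemma normsq (x : R) : `|x| ^+ 2 = x ^+ 2.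
Proof. by rewrite real_normK // num_real. Qed.

Lemma sep_sq (z y : R * R) g : 0 <= g -> sep z y g ->
  g ^+ 2 <= (z.1 - y.1) ^+ 2 + (z.2 - y.2) ^+ 2.
Proof.
move=> g0 [h|h].
  have := normsq (z.1 - y.1); have := sqr_ge0 (z.2 - y.2);
  have := normr_ge0 (z.1 - y.1); nra.
have := normsq (z.2 - y.2); have := sqr_ge0 (z.1 - y.1);
have := normr_ge0 (z.2 - y.2); nra.
Qed.

Lemma kern_bnd (u v g : R) : 0 < g -> g ^+ 2 <= u ^+ 2 + v ^+ 2 ->
  `|u / (u ^+ 2 + v ^+ 2)| <= g^-1.
Proof.
move=> g0 hr.
set r := u ^+ 2 + v ^+ 2.
have r0 : 0 < r by apply: lt_le_trans hr; rewrite exprn_gt0.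
have hA : u / r * r = u by rewrite mulfVK // gt_eqF.
have hgi : g^-1 * g = 1 by rewrite mulVf // gt_eqF.
have gi0 : 0 < g^-1 by rewrite invr_gt0.
move: (u / r) hA => A hA.
have hAn : `|A| * r = `|u|.
  by rewrite -[in RHS]hA normrM (gtr0_norm r0).
have hu := normsq u; have hv := sqr_ge0 v.
have hun := normr_ge0 u; have hAn0 := normr_ge0 A.
have key : `|u| * g <= r.
  rewrite /r; have := sqr_ge0 (`|u| - g); nra.
nra.
Qed.

Lemma kern_lip (u v u' v' g s : R) : 0 < g -> 0 <= s ->
  g ^+ 2 <= u ^+ 2 + v ^+ 2 -> g ^+ 2 <= u' ^+ 2 + v' ^+ 2 ->
  `|u - u'| <= s -> `|v - v'| <= s ->
  `|u / (u ^+ 2 + v ^+ 2) - u' / (u' ^+ 2 + v' ^+ 2)| <= 2%:R * s / g ^+ 2.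
Proof.
move=> g0 s0 hr hr' hu hv.
set r := u ^+ 2 + v ^+ 2. set r' := u' ^+ 2 + v' ^+ 2.
have r0 : 0 < r by apply: lt_le_trans hr; rewrite exprn_gt0.
have r0' : 0 < r' by apply: lt_le_trans hr'; rewrite exprn_gt0.
have iden : (u / r - u' / r') ^+ 2 + (v / r - v' / r') ^+ 2 =
   ((u - u') ^+ 2 + (v - v') ^+ 2) / (r * r').
  rewrite /r /r'; field; apply/andP; split; rewrite gt_eqF //.
move: (u / r - u' / r') (v / r - v' / r') iden => A B iden.
have hAB : (A ^+ 2 + B ^+ 2) * (r * r') = (u - u') ^+ 2 + (v - v') ^+ 2.
  by rewrite iden mulfVK // mulf_neq0 // gt_eqF.
have g2 : 0 < g ^+ 2 by rewrite exprn_gt0.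
have hrr : g ^+ 2 * g ^+ 2 <= r * r' by apply: ler_pM => //; apply: ltW.
have h1 := normsq (u - u'). have h2 := normsq (v - v').
have h3 := normr_ge0 (u - u'). have h4 := normr_ge0 (v - v').
have hB := sqr_ge0 B.
have hA2 : A ^+ 2 * (g ^+ 2 * g ^+ 2) <= 2%:R * s ^+ 2.
  have : A ^+ 2 * (g ^+ 2 * g ^+ 2) <= A ^+ 2 * (r * r').
    by apply: ler_wpM2l => //; exact: sqr_ge0.
  nra.
rewrite ler_pdivlMr //.
have hAn := normsq A. have hA0 := normr_ge0 A.
nra.
Qed.

Lemma kern_lip_neg (u v u' v' g s : R) : 0 < g -> 0 <= s ->
  g ^+ 2 <= u ^+ 2 + v ^+ 2 -> g ^+ 2 <= u' ^+ 2 + v' ^+ 2 ->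
  `|u - u'| <= s -> `|v - v'| <= s ->
  `|- v / (u ^+ 2 + v ^+ 2) - - v' / (u' ^+ 2 + v' ^+ 2)| <= 2%:R * s / g ^+ 2.
Proof.
move=> g0 s0 hr hr' hu hv.
rewrite !mulNr opprK addrC -opprB normrN.
rewrite (addrC (u ^+ 2)) (addrC (u' ^+ 2)).
apply: kern_lip => //; lra.
Qed.

End Kern.

Section Num.
Variable R : realType.
Variable lam : nat -> R.
Variable l0 : R.
Hypothesis hl : forall n : nat, (0 < n)%N -> 4%:R^-1 <= lam n /\ lam n <= l0.
Hypothesis hl0 : l0 < 2%:R^-1.

Definition ee := 1 - 2%:R * l0.
Definition qq := 4%:R * l0 ^+ 2.
Definition DD := 2%:R / (ee ^+ 2 * (1 - qq)).

Lemma l0_bnd : 4%:R^-1 <= l0.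
Proof. have [h1 h2] := hl (ltn0Sn 0); exact: le_trans h1 h2. Qed.

Lemma ee_pos : 0 < ee.
Proof.
have h2 : (2%:R : R)^-1 * 2%:R = 1 by rewrite mulVf // pnatr_eq0.
move: hl0 h2; rewrite /ee; set t := (2%:R : R)^-1. nra.
Qed.

Lemma qq_bnd : 0 <= qq < 1.
Proof.
have h2 : (2%:R : R)^-1 * 2%:R = 1 by rewrite mulVf // pnatr_eq0.
have h4 : (4%:R : R)^-1 * 4%:R = 1 by rewrite mulVf // pnatr_eq0.
have := l0_bnd.
move: hl0 h2 h4; rewrite /qq; set t := (2%:R : R)^-1; set t4 := (4%:R : R)^-1. nra.
Qed.

Lemma Vbnd n : 4%:R ^+ n * side lam n ^+ 2 *
   (\sum_(k < n) (4%:R ^+ k * side lam k ^+ 2)^-1) * (1 - qq) <= qq.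
Proof.
have [q0 q1] := andP qq_bnd.
elim: n => [|n IH]; first by rewrite big_ord0 mulr0 mul0r.
rewrite big_ord_recr /= (sideS lam) exprSr.
set S := \sum_(i < n) _.
have sp := side_pos hl n.
have lp := lam_pos hl (ltn0Sn n). have ll := lam_le hl (ltn0Sn n).
set l := lam n.+1 in lp ll *.
set X := 4%:R ^+ n * side lam n ^+ 2.
have X0 : 0 < X by rewrite /X mulr_gt0 // exprn_gt0 // ltr0n.
have -> : 4%:R ^+ n * 4%:R * (side lam n * l) ^+ 2 * (S + X^-1) =
   4%:R * l ^+ 2 * (X * S + 1).
  rewrite /X; field.
  by rewrite gt_eqF //= expf_neq0 // pnatr_eq0.
have hq : 4%:R * l ^+ 2 <= qq by rewrite /qq ler_pM2l ?ltr0n // ler_pXn2r // ?nnegrE ltW // (lt_le_trans lp ll).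
have S0 : 0 <= S by apply: sumr_ge0 => i _; rewrite invr_ge0 mulr_ge0 // ?exprn_ge0 // ltW // (side_pos hl).
have XS0 : 0 <= X * S by apply: mulr_ge0 => //; apply: ltW.
have l2 : 0 <= 4%:R * l ^+ 2 by rewrite mulr_ge0 // sqr_ge0.
move: IH; rewrite -/X -/S => IH.
move: (X * S) XS0 IH => Y Y0 IH.
move: (4%:R * l ^+ 2) l2 hq => L L0 hq.
have h := mulr_ge0 L0 (ltW (le_lt_trans (lexx 0) (lt_le_trans ltr01 (lexx 1)))). clear h.
have h : 0 <= L * (qq - Y * (1 - qq)) by apply: mulr_ge0 => //; rewrite subr_ge0.
nra.
Qed.

Lemma sum_bnd n : \sum_(k < n) (2%:R * side lam n / (side lam k * ee) ^+ 2) * (4%:R ^+ k)^-1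
   <= DD * a_ lam n.
Proof.
have [q0 q1] := andP qq_bnd.
have e0 := ee_pos.
have sp := side_pos hl n.
set S := \sum_(k < n) (4%:R ^+ k * side lam k ^+ 2)^-1.
have -> : \sum_(k < n) (2%:R * side lam n / (side lam k * ee) ^+ 2) * (4%:R ^+ k)^-1
    = 2%:R * side lam n / ee ^+ 2 * S.
  rewrite /S mulr_sumr; apply: eq_bigr => k _.
  have := side_pos hl k => skp.
  field; rewrite ?expf_neq0 ?mulf_neq0 ?pnatr_eq0 // ?gt_eqF //.
have := Vbnd n; rewrite -/S => V.
set X := 4%:R ^+ n * side lam n ^+ 2 in V.
have X0 : 0 < 4%:R ^+ n :> R by rewrite exprn_gt0 // ltr0n.
rewrite -subr_ge0.
have -> : DD * a_ lam n - 2%:R * side lam n / ee ^+ 2 * S =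
   2%:R / (ee ^+ 2 * (1 - qq) * (4%:R ^+ n * side lam n)) * (1 - X * S * (1 - qq)).
  rewrite /DD /a_ /X; field.
  by rewrite !gt_eqF //= ?subr_gt0 // expf_neq0 // pnatr_eq0.
apply: mulr_ge0; last by rewrite subr_ge0; apply: le_trans V (ltW q1).
apply: divr_ge0 => //; apply: mulr_ge0; last by apply: mulr_ge0 => //; apply: ltW.
by apply: mulr_ge0; [exact: sqr_ge0 | rewrite subr_ge0 ltW].
Qed.

Lemma DD_pos : 0 < DD.
Proof.
have [q0 q1] := andP qq_bnd.
rewrite /DD divr_gt0 // ?ltr0n // mulr_gt0 // ?subr_gt0 // exprn_gt0 //; exact: ee_pos.
Qed.

End Num.

Section Meas1.
Context d (T : measurableType d) (R : realType).
Variable mu : {finite_measure set T -> \bar R}.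

Lemma int_bnd (D : set T) (g : T -> R) (M : R) : measurable D ->
  measurable_fun D g -> (forall x, D x -> `|g x| <= M) ->
  mu.-integrable D (EFin \o g).
Proof.
move=> mD mg hg.
apply: (le_integrable mD _ _ (finite_measure_integrable_cst mu M mD)).
- exact/measurable_EFinP.
- move=> x Dx /=; rewrite lee_fin; apply: le_trans (hg x Dx) _.
  exact: ler_norm.
Qed.

Lemma fine_mu_ge0 (A : set T) : 0 <= fine (mu A).
Proof. exact: fine_ge0 (measure_ge0 mu A). Qed.

Lemma mu_fin (A : set T) : measurable A -> mu A \is a fin_num.
Proof. by move=> mA; exact: fin_num_measure. Qed.

Lemma Rint_norm_bnd (D : set T) (g : T -> R) (M : R) : measurable D ->
  measurable_fun D g -> (forall x, D x -> `|g x| <= M) ->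
  `|\int[mu]_(x in D) g x| <= M * fine (mu D).
Proof.
move=> mD mg hg.
have ig := int_bnd mD mg hg.
apply: le_trans (le_normr_Rintegral mD ig) _.
rewrite -Rintegral_cst //.
apply: le_Rintegral => //.
- apply: (int_bnd (M := M)) => //.
    by apply: measurableT_comp => //; exact: normr_measurable.
  by move=> x Dx; rewrite normr_id hg.
- exact: finite_measure_integrable_cst.
Qed.

Lemma osc (A : set T) (G1 G2 : T -> R) (M0 c M : R) : measurable A ->
  0 < fine (mu A) ->
  measurable_fun A G1 -> measurable_fun A G2 ->
  (forall z, A z -> `|G1 z| <= M0 /\ `|G2 z| <= M0) ->
  (forall z, A z -> `|G1 z - G2 z - c| <= M) ->
  `|(fine (mu A))^-1 * \int[mu]_(x in A) G1 x -
    (fine (mu A))^-1 * \int[mu]_(x in A) G2 x - c| <= M.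
Proof.
move=> mA hA m1 m2 hb hM.
have i1 : mu.-integrable A (EFin \o G1) by apply: (int_bnd (M := M0)) => // z /hb [].
have i2 : mu.-integrable A (EFin \o G2) by apply: (int_bnd (M := M0)) => // z /hb [].
have i3 : mu.-integrable A (EFin \o (fun x => G1 x - G2 x)) by exact: (integrableB mA i1 i2).
have ic : mu.-integrable A (EFin \o cst c) by exact: finite_measure_integrable_cst.
have -> : (fine (mu A))^-1 * \int[mu]_(x in A) G1 x -
    (fine (mu A))^-1 * \int[mu]_(x in A) G2 x - c =
   (fine (mu A))^-1 * \int[mu]_(x in A) (G1 x - G2 x - c).
  rewrite RintegralB // RintegralB // Rintegral_cst //.
  field; exact: lt0r_neq0.
rewrite normrM ger0_norm ?invr_ge0 ?fine_mu_ge0 //.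
rewrite ler_pdivrMl //.
rewrite mulrC; apply: Rint_norm_bnd => //.
by apply: measurable_funB => //; apply: measurable_funB.
Qed.


Definition hsum (c : nat -> R) (S : nat -> set T) n y :=
  \sum_(k < n) c k * \1_(S k) y.

Lemma hsum_meas c S n : (forall k, measurable (S k)) ->
  measurable_fun setT (hsum c S n).
Proof.
move=> mS; apply: measurable_sum => k.
by apply: measurable_funM => //; exact: measurable_indic.
Qed.

Lemma hsum_bnd c S n y : (forall k, 0 <= c k) ->
  0 <= hsum c S n y <= \sum_(k < n) c k.
Proof.
move=> c0; apply/andP; split.
  by apply: sumr_ge0 => k _; apply: mulr_ge0 => //; rewrite indicE ler0n.
apply: ler_sum => k _; rewrite indicE; case: (y \in S k); rewrite ?mulr1 ?mulr0 //.
Qed.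

Lemma hsum_Rint D c S n : measurable D -> (forall k, measurable (S k)) ->
  (forall k, 0 <= c k) ->
  \int[mu]_(y in D) hsum c S n y <= \sum_(k < n) c k * fine (mu (S k)).
Proof.
move=> mD mS c0; elim: n => [|n IH].
  rewrite big_ord0 /hsum.
  under eq_Rintegral do rewrite big_ord0.
  by rewrite Rintegral_cst // mul0r.
rewrite big_ord_recr /=.
have -> : \int[mu]_(y in D) hsum c S n.+1 y =
   \int[mu]_(y in D) (hsum c S n y + c n * \1_(S n) y).
  by apply: eq_Rintegral => y _; rewrite /hsum big_ord_recr.
have i1 : mu.-integrable D (EFin \o hsum c S n).
  apply: (int_bnd (M := \sum_(k < n) c k)) => //.
    exact: measurable_funS (hsum_meas c n mS).
  by move=> y _; have /andP [h1 h2] := hsum_bnd S n y c0; rewrite ger0_norm.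
have i2 : mu.-integrable D (EFin \o (fun y => \1_(S n) y : R)).
  apply: (int_bnd (M := 1)) => //; first exact: measurable_indic.
  by move=> y _; rewrite indicE; case: (y \in S n); rewrite ?normr1 ?normr0.
rewrite RintegralD //; last first.
  apply: (int_bnd (M := c n)) => //.
    by apply: measurable_funM => //; exact: measurable_indic.
  move=> y _; rewrite normrM ger0_norm // indicE.
  by case: (y \in S n); rewrite ?normr1 ?normr0 ?mulr1 ?mulr0.
apply: lerD => //.
rewrite RintegralZl //; apply: ler_wpM2l => //.
rewrite /Rintegral integral_indic //.
apply: fine_le; [apply: mu_fin; exact: measurableI | exact: mu_fin | exact: measureIl].
Qed.

Lemma Rint_null (B N : set T) (g : T -> R) (M : R) :
  measurable B -> measurable N -> mu N = 0 -> measurable_fun setT g ->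
  (forall y, B y -> ~ N y -> `|g y| <= M) ->
  mu.-integrable B (EFin \o g) /\
  \int[mu]_(y in B) g y = \int[mu]_(y in B `\` N) g y.
Proof.
move=> mB mN N0 mg hg.
have mBN : measurable (B `\` N) by exact: measurableD.
have i1 : mu.-integrable (B `\` N) (EFin \o g).
  apply: (int_bnd (M := M)) => //; first exact: measurable_funS mg.
  by move=> y [By Ny]; apply: hg.
have i2 : mu.-integrable B (EFin \o g).
  apply/(negligible_integrable mN mB _ N0) => //.
  by apply/measurable_EFinP; exact: measurable_funS mg.
split => //; rewrite /Rintegral; congr fine; exact: negligible_integral.
Qed.

Lemma ydiff (f : T -> T -> R) (z z' : T) (B N : set T) (n : nat) (c : nat -> R) (S : nat -> set T) (M : R) :
  measurable_fun setT (f z) -> measurable_fun setT (f z') ->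
  measurable B -> measurable N -> mu N = 0 -> (forall k, measurable (S k)) ->
  (forall k, 0 <= c k) ->
  (forall y, B y -> ~ N y -> [/\ `|f z y| <= M, `|f z' y| <= M &
        `|f z y - f z' y| <= hsum c S n y]) ->
  `|\int[mu]_(y in B) f z y - \int[mu]_(y in B) f z' y| <=
     \sum_(k < n) c k * fine (mu (S k)).
Proof.
move=> mf mf' mB mN N0 mS c0 hb.
have [_ e1] := Rint_null mB mN N0 mf (fun y By Ny => match hb y By Ny with And3 a _ _ => a end).
have [_ e2] := Rint_null mB mN N0 mf' (fun y By Ny => match hb y By Ny with And3 _ a _ => a end).
have mBN : measurable (B `\` N) by exact: measurableD.
have [i1 _] := Rint_null mBN mN N0 mf (M := M) (fun y By Ny => match hb y By.1 By.2 with And3 a _ _ => a end).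
have [i2 _] := Rint_null mBN mN N0 mf' (M := M) (fun y By Ny => match hb y By.1 By.2 with And3 _ a _ => a end).
rewrite e1 e2 -RintegralB //.
have i3 := integrableB mBN i1 i2.
apply: le_trans (le_normr_Rintegral mBN i3) _.
apply: le_trans (hsum_Rint n mBN mS c0).
apply: le_Rintegral => //.
- apply: (int_bnd (M := M + M)) => //.
    apply: (measurable_funS measurableT) => //.
    apply: measurableT_comp; first exact: normr_measurable.
    exact: measurable_funB mf mf'.
  move=> y [By Ny]; have [h1 h2 _] := hb y By Ny.
  rewrite normr_id; apply: le_trans (ler_normB _ _) _; exact: lerD.
- apply: (int_bnd (M := \sum_(k < n) c k)) => //.
    exact: measurable_funS (hsum_meas c n mS).
  by move=> y _; have /andP [h1 h2] := hsum_bnd S n y c0; rewrite ger0_norm.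
- by move=> y [By Ny]; have [_ _ h3] := hb y By Ny.
Qed.

Lemma ybnd (g : T -> R) (B N : set T) (M : R) :
  measurable_fun setT g -> measurable B -> measurable N -> mu N = 0 -> 0 <= M ->
  (forall y, B y -> ~ N y -> `|g y| <= M) ->
  `|\int[mu]_(y in B) g y| <= M * fine (mu B).
Proof.
move=> mg mB mN N0 M0 hb.
have [_ e1] := Rint_null mB mN N0 mg hb.
have mBN : measurable (B `\` N) by exact: measurableD.
rewrite e1; apply: le_trans (Rint_norm_bnd mBN (measurable_funS _ _ mg) _) _ => //.
  by move=> y [By Ny]; apply: hb.
apply: ler_wpM2l => //; apply: fine_le; [exact: mu_fin | exact: mu_fin |].
by apply: le_measure => //; rewrite inE.
Qed.

End Meas1.

Section Meas3.
Context d (T : measurableType d) (R : realType).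
Variable mu : {finite_measure set T -> \bar R}.

Lemma Fmeas (f : T -> T -> R) (B : set T) : measurable B ->
  measurable_fun setT (fun p : T * T => f p.1 p.2) ->
  measurable_fun setT (fun z => \int[mu]_(y in B) f z y).
Proof.
move=> mB mf.
pose G := fun p : T * T => (f p.1 p.2 * \1_B p.2)%:E.
have mG : measurable_fun setT G.
  apply/measurable_EFinP; apply: measurable_funM => //.
  apply: measurableT_comp; [exact: measurable_indic | exact: measurable_snd].
have e : (fun z => \int[mu]_(y in B) f z y) =
   (fun z => fine (fubini_F mu (G^\+) z - fubini_F mu (G^\-) z)).
  apply/funext => z; rewrite /Rintegral integral_mkcond integralE.
  congr (fine (_ - _)); apply: eq_integral => y _.
    rewrite /fubini_F !funeposE /G /patch indicE; case: (y \in B) => //=.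
      by rewrite mulr1.
    by rewrite mulr0.
  rewrite /fubini_F !funenegE /G /patch indicE; case: (y \in B) => //=.
    by rewrite mulr1.
  by rewrite mulr0.
rewrite e; apply: measurableT_comp; first exact: fine_measurable.
apply: emeasurable_funB.
  apply: measurable_fun_fubini_tonelli_F; first exact: measurable_funepos.
  by move=> x; exact: funepos_ge0.
apply: measurable_fun_fubini_tonelli_F; first exact: measurable_funeneg.
by move=> x; exact: funeneg_ge0.
Qed.

End Meas3.

Section KernMeas.
Variable R : realType.
Local Notation T := (R * R)%type.

Lemma inv_meas : measurable_fun setT (@GRing.inv R).
Proof.
have -> : [set: R] = ~` [set 0] `|` [set 0] by rewrite setUC setUCr.
apply/measurable_funU => //.
  by apply: measurableC.
split.
  apply: open_continuous_measurable_fun.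
    by rewrite openC; exact: closed_eq.
  move=> x; rewrite inE => hx; apply: inv_continuous; apply/eqP; exact: hx.
apply: (eq_measurable_fun (fun _ : R => (0:R))); last exact: measurable_cst.
by move=> x; rewrite inE => ->; rewrite invr0.
Qed.

Lemma cre_meas : measurable_fun setT (fun p : T * T => cauchy_re p.1 p.2).
Proof.
have mu1 : measurable_fun setT (fun p : T * T => p.1.1 - p.2.1).
  apply: measurable_funB.
    exact: measurableT_comp measurable_fst measurable_fst.
  exact: measurableT_comp measurable_fst measurable_snd.
have mv1 : measurable_fun setT (fun p : T * T => p.1.2 - p.2.2).
  apply: measurable_funB.
    exact: measurableT_comp measurable_snd measurable_fst.
  exact: measurableT_comp measurable_snd measurable_snd.
rewrite /cauchy_re; apply: measurable_funM => //.
apply: measurableT_comp; first exact: inv_meas.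
by apply: measurable_funD; apply: measurable_funX.
Qed.

Lemma cim_meas : measurable_fun setT (fun p : T * T => cauchy_im p.1 p.2).
Proof.
have mu1 : measurable_fun setT (fun p : T * T => p.1.1 - p.2.1).
  apply: measurable_funB.
    exact: measurableT_comp measurable_fst measurable_fst.
  exact: measurableT_comp measurable_fst measurable_snd.
have mv1 : measurable_fun setT (fun p : T * T => p.1.2 - p.2.2).
  apply: measurable_funB.
    exact: measurableT_comp measurable_snd measurable_fst.
  exact: measurableT_comp measurable_snd measurable_snd.
rewrite /cauchy_im; apply: measurable_funM => //.
  apply: measurableT_comp; [exact: oppr_measurable | exact: mv1].
apply: measurableT_comp; first exact: inv_meas.
by apply: measurable_funD; apply: measurable_funX.
Qed.

Lemma cre_meas1 (z : T) : measurable_fun setT (@cauchy_re R z).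
Proof. exact: (measurable_fun_pair2 z cre_meas). Qed.
Lemma cim_meas1 (z : T) : measurable_fun setT (@cauchy_im R z).
Proof. exact: (measurable_fun_pair2 z cim_meas). Qed.

End KernMeas.

Section Cantor2.
Variable R : realType.
Local Notation T := (R * R)%type.
Variable lam : nat -> R.
Variable l0 : R.
Hypothesis hl : forall n : nat, (0 < n)%N -> 4%:R^-1 <= lam n /\ lam n <= l0.
Hypothesis hl0 : l0 < 2%:R^-1.
Variable mu : probability T R.
Hypothesis hmu : forall (n : nat) (Q : set T), inD lam n Q -> mu Q = ((4%:R ^+ n)^-1)%:E.

Lemma itv_set (a b : R) : [set x | a <= x <= b] = `[a, b]%classic.
Proof. by apply/seteqP; split => x /=; rewrite in_itv. Qed.

Lemma square_meas w : measurable (square lam w).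
Proof.
have -> : square lam w = [set x | cornerx lam w <= x <= cornerx lam w + side lam (size w)]
   `*` [set x | cornery lam w <= x <= cornery lam w + side lam (size w)].
  by apply/seteqP; split => z.
by rewrite !itv_set; apply: measurableX.
Qed.

Lemma mu_square w : mu (square lam w) = ((4%:R ^+ size w)^-1)%:E.
Proof. by apply: hmu; exists w. Qed.

Lemma fmu_square w : fine (mu (square lam w)) = (4%:R ^+ size w)^-1.
Proof. by rewrite mu_square. Qed.

Definition Ucyl N := [set z : T | exists w, size w = N /\ square lam w z].

Definition FU N (i : 'I_#|{: N.-tuple 'I_4}|) := square lam (tval (enum_val i)).

Lemma bigU_seq (I : eqType) (r : seq I) (F : I -> set T) z :
  (\big[setU/set0]_(i <- r) F i) z <-> exists2 i, i \in r & F i z.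
Proof.
elim: r => [|a r IH]; first by rewrite big_nil; split => // [[i]].
rewrite big_cons; split.
  case=> [h|/IH [i hi h]]; first by exists a => //; rewrite mem_head.
  by exists i => //; rewrite in_cons hi orbT.
move=> [i]; rewrite in_cons => /orP [/eqP -> h|hi h]; first by left.
by right; apply/IH; exists i.
Qed.

Lemma bigU_mem n (F : 'I_n -> set T) z :
  (\big[setU/set0]_(i < n) F i) z <-> exists i, F i z.
Proof.
rewrite bigU_seq; split; first by move=> [i _ h]; exists i.
by move=> [i h]; exists i => //; rewrite mem_index_enum.
Qed.

Lemma U_big N : Ucyl N = \big[setU/set0]_(i < #|{: N.-tuple 'I_4}|) FU i.
Proof.
apply/seteqP; split => z.
  move=> [w [hw hz]]; apply/bigU_mem.
  have hw' : size w == N by apply/eqP.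
  exists (enum_rank (Tuple hw')); rewrite /FU enum_rankK //.
move=> /bigU_mem [i hi]; exists (tval (enum_val i)); split => //.
exact: size_tuple.
Qed.

Lemma FU_triv N : trivIset setT (@FU N).
Proof.
move=> i j _ _ [z [hi hj]].
apply: enum_val_inj; apply: val_inj.
apply: (square_inj hl hl0 (z := z)) => //.
by rewrite !size_tuple.
Qed.

Lemma U_meas N : measurable (Ucyl N).
Proof.
rewrite U_big; apply: bigsetU_measurable => i _; exact: square_meas.
Qed.

Lemma mu_U N : mu (Ucyl N) = 1%E.
Proof.
rewrite U_big measure_bigsetU_ord //; last first.
  exact: FU_triv.
  by move=> i; exact: square_meas.
have -> : \sum_(i < #|{: N.-tuple 'I_4}|) mu (FU i) =
    \sum_(i < #|{: N.-tuple 'I_4}|) ((4%:R ^+ N)^-1)%:E.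
  apply: eq_bigr => i _; rewrite /FU mu_square size_tuple //.
rewrite sumEFin sumr_const card_ord card_tuple card_ord; congr EFin.
rewrite -[_ *+ (4 ^ N)%N]mulr_natr natrX mulVf // expf_neq0 // pnatr_eq0.
Qed.

Lemma mu_notU N : mu (~` Ucyl N) = 0%E.
Proof.
rewrite -setTD (measureD measurableT (U_meas N)); last first.
  by rewrite -ge0_fin_numE ?measure_ge0 //; exact: fin_num_measure.
have h1 : mu setT = 1%E := probability_setT mu.
rewrite setTI; transitivity (1%E - 1%E : \bar R)%E; last by rewrite subee.
by congr (_ - _)%E; [exact: h1 | exact: mu_U].
Qed.

Lemma K_eq : Kset lam = \bigcap_N Ucyl N.
Proof.
apply/seteqP; split => z.
  by move=> hz N _; have [Q [[w [hw ->]] hQ]] := hz N; exists w.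
move=> hz N; have [w [hw h]] := hz N I; exists (square lam w); split => //.
by exists w.
Qed.

Lemma K_meas : measurable (Kset lam).
Proof. rewrite K_eq; apply: bigcapT_measurable => N; exact: U_meas. Qed.

Lemma mu_notK : mu (~` Kset lam) = 0%E.
Proof.
apply/eqP; rewrite eq_le measure_ge0 andbT.
rewrite K_eq setC_bigcap.
apply: le_trans (measure_sigma_subadditive _ _ _ _) _.
- by move=> N; apply: measurableC; exact: U_meas.
- by apply: bigcup_measurable => N _; apply: measurableC; exact: U_meas.
- exact: subset_refl.
by rewrite eseries0 // => i _ _; exact: mu_notU.
Qed.

End Cantor2.

Section Main.
Variable R : realType.
Local Notation T := (R * R)%type.
Variable lam : nat -> R.
Variable l0 : R.
Hypothesis hl : forall n : nat, (0 < n)%N -> 4%:R^-1 <= lam n /\ lam n <= l0.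
Hypothesis hl0 : l0 < 2%:R^-1.
Variable mu : probability T R.
Hypothesis hmu : forall (n : nat) (Q : set T), inD lam n Q -> mu Q = ((4%:R ^+ n)^-1)%:E.

Local Notation K := (Kset lam).
Local Notation e := (ee l0).

Lemma K_word N y : K y -> exists v, size v = N /\ square lam v y.
Proof. by move=> /(_ N) [Q [[v [hv ->]] hQ]]; exists v. Qed.

Lemma notnotK y : ~ (~` K) y -> K y.
Proof. by move=> h; case: (pselect (K y)) => // hK. Qed.

Lemma W2 w j y : (j <= size w)%N -> K y -> ~ square lam w y -> square lam (take j w) y ->
  exists k, [/\ (j <= k)%N, (k < size w)%N, square lam (take k w) y &
     forall z, square lam w z -> sep z y (side lam k * e)].
Proof.
move=> hj hK hny hjy.
have [v [hv hy]] := K_word (size w) hK.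
have hne : w <> v by move=> ewv; apply: hny; rewrite ewv.
have htj : take j w = take j v.
  have := square_prefix hl hl0 (u := take j w) (v := v) (z := y).
  rewrite size_takel // => h; apply: h => //; rewrite ?hv //.
have [k [h1 h2 h3 h4]] := word_sep hl hl0 (esym hv) hne htj.
exists k; split => //.
  rewrite h3; apply: (square_take hl hl0) => //; rewrite hv; exact: ltnW.
by move=> z hz; apply: h4.
Qed.

Lemma K_sq0 y : K y -> square lam [::] y.
Proof.
move=> hK; have [v [hv hy]] := K_word 0 hK.
by move/size0nil: hv => hv; rewrite -hv.
Qed.

Lemma sq_diam w z z' : square lam w z -> square lam w z' ->
  `|z.1 - z'.1| <= side lam (size w) /\ `|z.2 - z'.2| <= side lam (size w).
Proof.
move=> [/andP[h1 h2] /andP[h3 h4]] [/andP[h5 h6] /andP[h7 h8]].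
by split; rewrite ler_norml; apply/andP; split; lra.
Qed.

Lemma fmu_le1 (B : set T) : measurable B -> fine (mu B) <= 1.
Proof.
move=> mB.
have h1 : mu setT = 1%E := probability_setT mu.
have : (mu B <= mu setT)%E by apply: le_measure => //; rewrite inE.
rewrite h1 => h.
have h2 : (1%E : \bar R) \is a fin_num by [].
exact: (fine_le (fin_num_measure _ _ mB) h2 h).
Qed.

Lemma fmu_sq_pos w : 0 < fine (mu (square lam w)).
Proof.
rewrite (fmu_square hmu) invr_gt0 exprn_gt0 // ltr0n //.
Qed.

Lemma hsum_ge (c : nat -> R) (S : nat -> set T) n k y : (forall k, 0 <= c k) ->
  (k < n)%N -> S k y -> c k <= hsum c S n y.
Proof.
move=> c0 hk hy; rewrite /hsum (bigD1 (Ordinal hk)) //= indicE.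
have -> : y \in S k by rewrite inE.
rewrite mulr1 lerDl; apply: sumr_ge0 => i _; apply: mulr_ge0 => //.
Qed.

Variable f : T -> T -> R.
Hypothesis fm2 : measurable_fun setT (fun p : T * T => f p.1 p.2).
Hypothesis fm1 : forall z, measurable_fun setT (f z).
Hypothesis fb : forall z y g, 0 < g -> sep z y g -> `|f z y| <= g^-1.
Hypothesis fl : forall z z' y g s, 0 < g -> 0 <= s -> sep z y g -> sep z' y g ->
  `|z.1 - z'.1| <= s -> `|z.2 - z'.2| <= s -> `|f z y - f z' y| <= 2%:R * s / g ^+ 2.

Definition FF (B : set T) z := \int[mu]_(y in B) f z y.

Lemma FF_meas B : measurable B -> measurable_fun setT (FF B).
Proof. by move=> mB; apply: Fmeas. Qed.

Lemma Fosc w B z z' : measurable B -> (forall y, B y -> ~ square lam w y) ->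
  square lam w z -> square lam w z' ->
  `|FF B z - FF B z'| <= DD l0 * a_ lam (size w).
Proof.
move=> mB hB hz hz'.
set n := size w.
pose c := fun k => 2%:R * side lam n / (side lam k * e) ^+ 2.
pose S := fun k => square lam (take k w).
have c0 : forall k, 0 <= c k.
  move=> k; rewrite /c; apply: divr_ge0; last exact: sqr_ge0.
  by apply: mulr_ge0 => //; apply: ltW; exact: (side_pos hl).
have hsn := side_pos hl n.
have epos := ee_pos hl0.
apply: le_trans (ydiff (f := f) (z := z) (z' := z') (B := B) (N := ~` K) (n := n) (c := c) (S := S)
   (M := (side lam n * e)^-1) (fm1 z) (fm1 z') mB (measurableC (K_meas lam)) (mu_notK hl hl0 hmu)
   (fun k => square_meas _ _) c0 _) _.
  move=> y By /notnotK hK.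
  have h0 : square lam (take 0 w) y by rewrite take0; exact: K_sq0.
  have [k [_ hk hyk hsep]] := W2 (leq0n n) hK (hB y By) h0.
  have gk : 0 < side lam k * e by apply: mulr_gt0 => //; exact: (side_pos hl).
  have gle : (side lam k * e)^-1 <= (side lam n * e)^-1.
    rewrite lef_pV2 ?posrE //; last by apply: mulr_gt0.
    by apply: ler_wpM2r; [exact: ltW | exact: (side_le hl hl0 (ltnW hk))].
  split.
  - exact: le_trans (fb gk (hsep z hz)) gle.
  - exact: le_trans (fb gk (hsep z' hz')) gle.
  - have [d1 d2] := sq_diam hz hz'.
    apply: le_trans (fl gk (ltW hsn) (hsep z hz) (hsep z' hz') d1 d2) _.
    exact: (hsum_ge (c := c) (S := S) c0 hk hyk).
apply: le_trans (sum_bnd hl hl0 n).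
rewrite le_eqVlt; apply/orP; left; apply/eqP.
apply: eq_bigr => k _; rewrite /S (fmu_square hmu) size_takel //.
exact: ltnW (ltn_ord k).
Qed.

Lemma Fbnd z B g : measurable B -> 0 < g -> (forall y, B y -> K y -> sep z y g) ->
  `|FF B z| <= g^-1 * fine (mu B).
Proof.
move=> mB g0 hB.
apply: (ybnd (fm1 z) mB (measurableC (K_meas lam)) (mu_notK hl hl0 hmu)).
  by rewrite invr_ge0 ltW.
by move=> y By /notnotK hK; apply: fb => //; apply: hB.
Qed.

Lemma osc1 (A : set T) (G : T -> R) (M0 c M : R) : measurable A -> 0 < fine (mu A) ->
  measurable_fun A G -> (forall z, A z -> `|G z| <= M0) ->
  (forall z, A z -> `|G z - c| <= M) ->
  `|(fine (mu A))^-1 * \int[mu]_(x in A) G x - c| <= M.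
Proof.
move=> mA hA mG hb hM.
have := @osc _ _ _ mu A G (fun _ => 0) (M0 + `|M0|) c M mA hA mG (measurable_cst _) _ _.
rewrite Rintegral_cst // mul0r mulr0 subr0; apply.
  move=> z Az; split; first by apply: le_trans (hb z Az) _; rewrite lerDl.
  by rewrite normr0; apply: le_trans (normr_ge0 (G z)) _; apply: le_trans (hb z Az) _; rewrite lerDl.
by move=> z Az; rewrite subr0; apply: hM.
Qed.

Lemma tri (a b c M1 M2 : R) : `|a - c| <= M1 -> `|b - c| <= M2 -> `|a - b| <= M1 + M2.
Proof.
move=> h1 h2; have -> : a - b = (a - c) - (b - c) by ring.
by apply: le_trans (ler_normB _ _) _; apply: lerD.
Qed.

Lemma Fbnd_sq w B z : measurable B -> (forall y, B y -> ~ square lam w y) ->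
  square lam w z -> `|FF B z| <= (side lam (size w) * e)^-1 * fine (mu B).
Proof.
move=> mB hB hz.
have epos := ee_pos hl0.
have gp : 0 < side lam (size w) * e by apply: mulr_gt0 => //; exact: (side_pos hl).
apply: (Fbnd mB gp) => y By hK.
have h0 : square lam (take 0 w) y by rewrite take0; exact: K_sq0.
have [k [_ hk hyk hsep]] := W2 (leq0n _) hK (hB y By) h0.
case: (hsep z hz) => h; [left|right]; apply: le_trans h.
  by apply: ler_wpM2r; [exact: ltW | exact: (side_le hl hl0 (ltnW hk))].
by apply: ler_wpM2r; [exact: ltW | exact: (side_le hl hl0 (ltnW hk))].
Qed.

Lemma word_sub m n Q Rs : (m <= n)%N -> inD lam m Q -> inD lam n Rs -> Rs `<=` Q ->
  exists wR, [/\ size wR = n, Rs = square lam wR & Q = square lam (take m wR)].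
Proof.
move=> hmn [wQ [hq ->]] [wR [hr ->]] hsub.
exists wR; split => //.
have hc := square_corner hl wR.
have hs : (size wQ <= size wR)%N by rewrite hq hr.
have := square_prefix hl hl0 hs (hsub _ hc) hc.
by rewrite hq => h; rewrite -h.
Qed.

Lemma part2 m n Q Rt Rs : (m <= n)%N -> inD lam m Q -> inD lam n Rt ->
  inD lam n.+1 Rs -> Rs `<=` Rt -> Rt `<=` Q ->
  `|avg_iint mu Rs (Q `\` Rs) f - avg_iint mu Rt (Q `\` Rt) f| <=
     (e^-1 + 2%:R * DD l0) * a_ lam n.
Proof.
move=> hmn hQ hRt hRs sRs sRt.
have [w [hw eRs eRt]] := word_sub (leqnSn n) hRt hRs sRs.
have [w' [hw' eRt' eQ]] := word_sub hmn hQ hRt sRt.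
have epos := ee_pos hl0.
have mQ : measurable Q by rewrite eQ; exact: square_meas.
have mRt : measurable Rt by rewrite eRt; exact: square_meas.
have mRs : measurable Rs by rewrite eRs; exact: square_meas.
set z0 := (cornerx lam w, cornery lam w).
have hz0 : Rs z0 by rewrite eRs; exact: (square_corner hl).
set c := FF (Q `\` Rt) z0.
have hnw : size (take n w) = n by rewrite size_takel // hw.
have oscRt : forall z, Rt z -> `|FF (Q `\` Rt) z - c| <= DD l0 * a_ lam n.
  move=> z hz; rewrite -[in a_ lam n]hnw.
  apply: Fosc; first exact: measurableD.
  - by move=> y [_ hy]; rewrite -eRt.
  - by rewrite -eRt.
  - by rewrite -eRt; exact: sRs.
have mQRt : measurable (Q `\` Rt) by exact: measurableD.
have mQRs : measurable (Q `\` Rs) by exact: measurableD.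
have mRtRs : measurable (Rt `\` Rs) by exact: measurableD.
have hA : `|avg_iint mu Rs (Q `\` Rs) f - c| <= e^-1 * a_ lam n + DD l0 * a_ lam n.
  apply: (@osc1 Rs (FF (Q `\` Rs)) ((side lam (size w) * e)^-1 * fine (mu (Q `\` Rs)))) => //.
  - by rewrite eRs; exact: fmu_sq_pos.
  - exact: measurable_funS (FF_meas mQRs).
  - move=> z hz; apply: Fbnd_sq => //; first by move=> y [_ hy]; rewrite -eRs.
    by rewrite -eRs.
  move=> z hz.
  have -> : FF (Q `\` Rs) z = FF (Q `\` Rt) z + FF (Rt `\` Rs) z.
    have -> : Q `\` Rs = (Q `\` Rt) `|` (Rt `\` Rs).
      apply/seteqP; split => y /=.
        move=> [hq hs]; case: (pselect (Rt y)) => h; [right|left]; by split.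
      move=> [[hq ht]|[ht hs]]; split => //; last exact: sRt.
      by move=> /sRs.
    rewrite /FF Rintegral_setU //.
    + have mU : measurable ((Q `\` Rt) `|` (Rt `\` Rs)) by apply: measurableU.
      have hbd : forall y, ((Q `\` Rt) `|` (Rt `\` Rs)) y -> ~ (~` K) y ->
          `|f z y| <= (side lam (size w) * e)^-1.
      move=> y hy /notnotK hK.
      have hB : (Q `\` Rs) y.
        case: hy => [[hq ht]|[ht hs]]; split => //; last exact: sRt.
        by move=> /sRs.
      have hny : ~ square lam w y by case: hB => _; rewrite -eRs.
      have h0 : square lam (take 0 w) y by rewrite take0; exact: K_sq0.
      have [k [_ hk hyk hsep]] := W2 (leq0n _) hK hny h0.
      have gk : 0 < side lam k * e by apply: mulr_gt0 => //; exact: (side_pos hl).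
      apply: le_trans (fb gk (hsep z _)) _; first by rewrite -eRs.
      rewrite lef_pV2 ?posrE //; last by apply: mulr_gt0 => //; exact: (side_pos hl).
      by apply: ler_wpM2r; [exact: ltW | exact: (side_le hl hl0 (ltnW hk))].
      have [i _] := @Rint_null _ _ _ mu _ (~` K) (f z) ((side lam (size w) * e)^-1) mU
          (measurableC (K_meas lam)) (mu_notK hl hl0 hmu) (fm1 z) hbd.
      exact: i.
    + by apply/disj_setPS => y [[_ h1] [h2 _]].
  have hY := oscRt z (sRs z hz).
  suff hX : `|FF (Rt `\` Rs) z| <= e^-1 * a_ lam n.
    rewrite addrAC; apply: le_trans (ler_normD _ _) _; lra.
  have gp : 0 < side lam n * e by apply: mulr_gt0 => //; exact: (side_pos hl).
  apply: le_trans (Fbnd mRtRs gp _) _.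
    move=> y [ht hs] hK.
    have hnj : (n <= size w)%N by rewrite hw.
    have hyt : square lam (take n w) y by rewrite -eRt.
    have hny : ~ square lam w y by rewrite -eRs.
    have [k [hk1 hk2 hyk hsep]] := W2 hnj hK hny hyt.
    have -> : n = k by apply/eqP; rewrite eqn_leq hk1 -ltnS -hw hk2.
    by apply: hsep; rewrite -eRs.
  have h4 : fine (mu (Rt `\` Rs)) <= (4%:R ^+ n)^-1.
    have h := le_measure mu (mem_set mRtRs) (mem_set mRt) (@subDsetl _ Rt Rs).
    have h' := fine_le (fin_num_measure _ _ mRtRs) (fin_num_measure _ _ mRt) h.
    have h6 : fine (mu Rt) <= (4%:R ^+ n)^-1 by rewrite (hmu hRt).
    exact: le_trans h' h6.
  rewrite /a_; apply: le_trans (ler_wpM2l _ h4) _.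
    by rewrite invr_ge0 ltW.
  rewrite le_eqVlt; apply/orP; left; apply/eqP; field.
  by rewrite !gt_eqF //= ?(side_pos hl) // exprn_gt0 // ltr0n.
have hB : `|avg_iint mu Rt (Q `\` Rt) f - c| <= DD l0 * a_ lam n.
  apply: (@osc1 Rt (FF (Q `\` Rt)) ((side lam (size (take n w)) * e)^-1 * fine (mu (Q `\` Rt)))) => //.
  - by rewrite eRt; exact: fmu_sq_pos.
  - exact: measurable_funS (FF_meas mQRt).
  - move=> z hz; apply: Fbnd_sq => //; first by move=> y [_ hy]; rewrite -eRt.
    by rewrite -eRt.
have := tri hA hB.
have -> : e^-1 * a_ lam n + DD l0 * a_ lam n + DD l0 * a_ lam n =
   (e^-1 + 2%:R * DD l0) * a_ lam n by ring.
done.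
Qed.

Lemma fbnd_sq w z y : square lam w z -> K y -> ~ square lam w y ->
  `|f z y| <= (side lam (size w) * e)^-1.
Proof.
move=> hz hK hny.
have epos := ee_pos hl0.
have h0 : square lam (take 0 w) y by rewrite take0; exact: K_sq0.
have [k [_ hk hyk hsep]] := W2 (leq0n _) hK hny h0.
have gk : 0 < side lam k * e by apply: mulr_gt0 => //; exact: (side_pos hl).
apply: le_trans (fb gk (hsep z hz)) _.
rewrite lef_pV2 ?posrE //; last by apply: mulr_gt0 => //; exact: (side_pos hl).
by apply: ler_wpM2r; [exact: ltW | exact: (side_le hl hl0 (ltnW hk))].
Qed.

Lemma part1 m n Q Rs : (m < n)%N -> inD lam m Q -> inD lam n Rs -> Rs `<=` Q ->
  `|avg_iint mu Rs (K `\` Rs) f - avg_iint mu Q (K `\` Q) f - avg_iint mu Rs (Q `\` Rs) f|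
    <= 2%:R * DD l0 * a_ lam m.
Proof.
move=> hmn hQ hRs sRs.
have [w [hw eRs eQ]] := word_sub (ltnW hmn) hQ hRs sRs.
have epos := ee_pos hl0.
have mQ : measurable Q by rewrite eQ; exact: square_meas.
have mRs : measurable Rs by rewrite eRs; exact: square_meas.
have mK := K_meas lam.
set z0 := (cornerx lam w, cornery lam w).
have hz0 : Rs z0 by rewrite eRs; exact: (square_corner hl).
set c := FF (K `\` Q) z0.
have hmw : size (take m w) = m by rewrite size_takel // hw ltnW.
have mKQ : measurable (K `\` Q) by exact: measurableD.
have mKRs : measurable (K `\` Rs) by exact: measurableD.
have mQRs : measurable (Q `\` Rs) by exact: measurableD.
have mQRsK : measurable ((Q `\` Rs) `&` K) by exact: measurableI.
have oscQ : forall z, Q z -> `|FF (K `\` Q) z - c| <= DD l0 * a_ lam m.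
  move=> z hz; rewrite -[in a_ lam m]hmw.
  apply: Fosc => //.
  - by move=> y [_ hy]; rewrite -eQ.
  - by rewrite -eQ.
  - by rewrite -eQ; exact: sRs.
have hA : `|avg_iint mu Rs (K `\` Rs) f - avg_iint mu Rs (Q `\` Rs) f - c| <= DD l0 * a_ lam m.
  apply: (@osc _ _ _ mu Rs _ _ ((side lam (size w) * e)^-1 * (fine (mu (K `\` Rs)) + fine (mu (Q `\` Rs))))) => //.
  - by rewrite eRs; exact: fmu_sq_pos.
  - exact: measurable_funS (FF_meas mKRs).
  - exact: measurable_funS (FF_meas mQRs).
  - have gi : 0 <= (side lam (size w) * e)^-1.
      by rewrite invr_ge0 ltW // mulr_gt0 // (side_pos hl).
    move=> z hz; split.
    + apply: le_trans (Fbnd_sq (w := w) mKRs _ _) _; first by move=> y [_ hy]; rewrite -eRs.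
        by rewrite -eRs.
      by apply: ler_wpM2l => //; rewrite lerDl fine_mu_ge0.
    + apply: le_trans (Fbnd_sq (w := w) mQRs _ _) _; first by move=> y [_ hy]; rewrite -eRs.
        by rewrite -eRs.
      by apply: ler_wpM2l => //; rewrite lerDr fine_mu_ge0.
  move=> z hz.
  have hzw : square lam w z by rewrite -eRs.
  have hbd : forall y, (K `\` Rs) y -> ~ (~` K) y -> `|f z y| <= (side lam (size w) * e)^-1.
    by move=> y [hK hy] _; apply: fbnd_sq => //; rewrite -eRs.
  have [iK _] := @Rint_null _ _ _ mu _ (~` K) (f z) _ mKRs (measurableC mK) (mu_notK hl hl0 hmu) (fm1 z) hbd.
  have hbd2 : forall y, (Q `\` Rs) y -> ~ (~` K) y -> `|f z y| <= (side lam (size w) * e)^-1.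
    by move=> y [hq hy] /notnotK hK; apply: fbnd_sq => //; rewrite -eRs.
  have [_ e2] := @Rint_null _ _ _ mu _ (~` K) (f z) _ mQRs (measurableC mK) (mu_notK hl hl0 hmu) (fm1 z) hbd2.
  have -> : FF (K `\` Rs) z - FF (Q `\` Rs) z = FF (K `\` Q) z.
    rewrite /FF e2 [(Q `\` Rs) `\` ~` K]setDE setCK.
    have eS : K `\` Rs = (K `\` Q) `|` ((Q `\` Rs) `&` K).
      apply/seteqP; split => y /=.
        move=> [hK hy]; case: (pselect (Q y)) => h; [right|left]; by split.
      move=> [[hK hq]|[[hq hy] hK]]; split => //.
      by move=> /sRs.
    rewrite eS in iK; rewrite eS Rintegral_setU //.
    + by rewrite addrK.
    + by apply/disj_setPS => y [[_ h1] [[h2 _] _]].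
  exact: oscQ (sRs z hz).
have hB : `|avg_iint mu Q (K `\` Q) f - c| <= DD l0 * a_ lam m.
  apply: (@osc1 Q (FF (K `\` Q)) ((side lam (size (take m w)) * e)^-1 * fine (mu (K `\` Q)))) => //.
  - by rewrite eQ; exact: fmu_sq_pos.
  - exact: measurable_funS (FF_meas mKQ).
  - move=> z hz; apply: Fbnd_sq => //; first by move=> y [_ hy]; rewrite -eQ.
    by rewrite -eQ.
have -> : avg_iint mu Rs (K `\` Rs) f - avg_iint mu Q (K `\` Q) f - avg_iint mu Rs (Q `\` Rs) f
   = (avg_iint mu Rs (K `\` Rs) f - avg_iint mu Rs (Q `\` Rs) f - c) - (avg_iint mu Q (K `\` Q) f - c)
  by ring.
apply: le_trans (ler_normB _ _) _.
have -> : 2%:R * DD l0 * a_ lam m = DD l0 * a_ lam m + DD l0 * a_ lam m by ring.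
exact: lerD.
Qed.

End Main.
Section Final.
Variable R : realType.
Local Notation T := (R * R)%type.

Lemma cmod_le (u v : R) : cmod u v <= `|u| + `|v|.
Proof.
rewrite /cmod -(@ger0_norm _ (`|u| + `|v|)); last by rewrite addr_ge0.
rewrite -sqrtr_sqr ler_sqrt; last exact: sqr_ge0.
have := normsq u; have := normsq v; have := normr_ge0 u; have := normr_ge0 v.
nra.
Qed.

Lemma cre_fb (z y : T) g : 0 < g -> sep z y g -> `|cauchy_re z y| <= g^-1.
Proof. by move=> g0 h; apply: kern_bnd => //; apply: sep_sq => //; exact: ltW. Qed.

Lemma cim_fb (z y : T) g : 0 < g -> sep z y g -> `|cauchy_im z y| <= g^-1.
Proof.
move=> g0 h; rewrite /cauchy_im mulNr normrN.
rewrite (addrC ((z.1 - y.1) ^+ 2)); apply: kern_bnd => //.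
rewrite (addrC ((z.2 - y.2) ^+ 2)); apply: sep_sq => //; exact: ltW.
Qed.

Lemma cre_fl (z z' y : T) g s : 0 < g -> 0 <= s -> sep z y g -> sep z' y g ->
  `|z.1 - z'.1| <= s -> `|z.2 - z'.2| <= s ->
  `|cauchy_re z y - cauchy_re z' y| <= 2%:R * s / g ^+ 2.
Proof.
move=> g0 s0 h h' d1 d2; apply: kern_lip => //.
- by apply: sep_sq => //; exact: ltW.
- by apply: sep_sq => //; exact: ltW.
- by have -> : z.1 - y.1 - (z'.1 - y.1) = z.1 - z'.1 by ring.
- by have -> : z.2 - y.2 - (z'.2 - y.2) = z.2 - z'.2 by ring.
Qed.

Lemma cim_fl (z z' y : T) g s : 0 < g -> 0 <= s -> sep z y g -> sep z' y g ->
  `|z.1 - z'.1| <= s -> `|z.2 - z'.2| <= s ->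
  `|cauchy_im z y - cauchy_im z' y| <= 2%:R * s / g ^+ 2.
Proof.
move=> g0 s0 h h' d1 d2; apply: kern_lip_neg => //.
- by apply: sep_sq => //; exact: ltW.
- by apply: sep_sq => //; exact: ltW.
- by have -> : z.1 - y.1 - (z'.1 - y.1) = z.1 - z'.1 by ring.
- by have -> : z.2 - y.2 - (z'.2 - y.2) = z.2 - z'.2 by ring.
Qed.

End Final.

Unset Implicit Arguments.

Theorem mainTheorem7 (R : realType) (lambda : R)
  (hlam1 : 4%:R^-1 <= lambda) (hlam2 : lambda < 2%:R^-1) :
  exists C : R, 0 < C /\
  forall (lam : nat -> R),
    (forall n : nat, (0 < n)%N -> 4%:R^-1 <= lam n /\ lam n <= lambda) ->
  forall (mu : probability (R * R)%type R),
    (forall (n : nat) (Q : set (R * R)), inD lam n Q ->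
        mu Q = ((4%:R ^+ n)^-1)%:E) ->
  (forall (m n : nat) (Q Rs : set (R * R)),
     (m < n)%N -> inD lam m Q -> inD lam n Rs -> Rs `<=` Q ->
     cmod (S_re mu lam Rs - S_re mu lam Q - SQR_re mu Q Rs)
          (S_im mu lam Rs - S_im mu lam Q - SQR_im mu Q Rs) <= C * a_ lam m) /\
  (forall (m n : nat) (Q Rt Rs : set (R * R)),
     (m <= n)%N -> inD lam m Q -> inD lam n Rt -> inD lam n.+1 Rs ->
     Rs `<=` Rt -> Rt `<=` Q ->
     cmod (SQR_re mu Q Rs - SQR_re mu Q Rt)
          (SQR_im mu Q Rs - SQR_im mu Q Rt) <= C * a_ lam n).
Proof.
have hl' : forall n : nat, (0 < n)%N -> 4%:R^-1 <= (fun _ : nat => lambda) n /\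
    (fun _ : nat => lambda) n <= lambda by move=> n _; split.
have epos := ee_pos hlam2.
have Dpos := DD_pos hl' hlam2.
exists (2%:R * ((ee lambda)^-1 + 2%:R * DD lambda)); split.
  by rewrite mulr_gt0 // addr_gt0 // ?invr_gt0 // mulr_gt0.
move=> lam hl mu hmu.
have ap : forall n, 0 <= a_ lam n.
  move=> n; rewrite /a_ divr_ge0 // mulr_ge0 // ?exprn_ge0 //; apply: ltW; exact: (side_pos hl).
have ei : 0 <= (ee lambda)^-1 by rewrite invr_ge0 ltW.
split.
- move=> m n Q Rs hmn hQ hRs sub.
  have h1 := part1 hl hlam2 hmu (@cre_meas R) (@cre_meas1 R) (@cre_fb R) (@cre_fl R) hmn hQ hRs sub.
  have h2 := part1 hl hlam2 hmu (@cim_meas R) (@cim_meas1 R) (@cim_fb R) (@cim_fl R) hmn hQ hRs sub.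
  apply: le_trans (cmod_le _ _) _.
  have := ap m; move: h1 h2; rewrite /S_re /S_im /SQR_re /SQR_im.
  set x := `| _ |; set y := `| _ |; move=> h1 h2 hap.
  have : 0 <= (ee lambda)^-1 * a_ lam m by apply: mulr_ge0.
  nra.
- move=> m n Q Rt Rs hmn hQ hRt hRs s1 s2.
  have h1 := part2 hl hlam2 hmu (@cre_meas R) (@cre_meas1 R) (@cre_fb R) (@cre_fl R) hmn hQ hRt hRs s1 s2.
  have h2 := part2 hl hlam2 hmu (@cim_meas R) (@cim_meas1 R) (@cim_fb R) (@cim_fl R) hmn hQ hRt hRs s1 s2.
  apply: le_trans (cmod_le _ _) _.
  move: h1 h2; rewrite /SQR_re /SQR_im.
  set x := `| _ |; set y := `| _ |; move=> h1 h2.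
  nra.
Qed.
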